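(* Let $K$ be a finite field, let $L$ be the quadratic extension of $K$, and let $d$ be an integer with $\gcd(d,|L|-1)=1$ that is degenerate over $K$. Then $W_{L,d}(a)\ge 0$ for all $a\in K$.
   Context: Let $p$ be the characteristic. $\psi_L(x)=\exp(2\pi i\,\mathrm{Tr}_{L/\mathbb{F}_p}(x)/p)$ and $W_{L,d}(a)=\sum_{x\in L}\psi_L(x^d+ax)$. $d$ is degenerate over $K$ if $d\equiv p^j\pmod{|K|-1}$ for some integer $j$. *)

(* Defs.v *)
From HB Require Import structures.
From mathcomp Require Import all_boot all_order all_algebra all_field.
From mathcomp Require Import reals trigo.
From mathcomp Require Import complex.
Set Implicit Arguments. Unset Strict Implicit. Unset Printing Implicit Defensive.
Import Order.TTheory GRing.Theory Num.Theory.
Local Open Scope ring_scope.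

Definition absTr (p : nat) (F : finFieldType) (x : F) : F :=
  \sum_(i < logn p #|F|) x ^+ (p ^ i).

(* The integer representative k in {0,...,p-1} of an element of the prime field
   (k%:R = y); defaults to 0 if y is not in the prime field. *)
Definition primeRep (p : nat) (F : finFieldType) (y : F) : nat :=
  oapp (@nat_of_ord p) 0%N [pick k : 'I_p | (k%:R == y)].

(* psi_F(x) = exp(2 pi i Tr(x)/p), as a complex number cos + i sin. *)
Definition psi (R : realType) (p : nat) (F : finFieldType) (x : F) : R[i] :=
  let t : R := (2 * pi * (primeRep p (absTr p x))%:R) / p%:R in
  Complex (cos t) (sin t).

Definition WLd (R : realType) (p : nat) (F : finFieldType) (d : nat) (a : F) : R[i] :=
  \sum_(x : F) psi R p (x ^+ d + a * x).

(* Main.v *)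
Require Import Defs.
From HB Require Import structures.
From mathcomp Require Import all_boot all_order all_algebra all_field.
From mathcomp Require Import reals trigo.
From mathcomp Require Import complex.
From mathcomp Require Import ring lra.
Import Order.TTheory GRing.Theory Num.Theory.
Local Open Scope ring_scope.

Set Implicit Arguments. Unset Strict Implicit.

Section Gen.
Variables (F : finFieldType) (p : nat) (hp : p \in [pchar F]).

Lemma gen_prime : prime p. Proof. exact: pcharf_prime hp. Qed.

Lemma gen_card : #|F| = (p ^ logn p #|F|)%N.
Proof. exact: (card_pprimeChar hp). Qed.

Lemma gen_pnat i : [pchar F].-nat (p ^ i)%N.
Proof. by rewrite (eq_pnat _ (pcharf_eq hp)) pnatX pnat_id ?gen_prime. Qed.

Lemma frobD (x y : F) i : (x + y) ^+ (p ^ i) = x ^+ (p ^ i) + y ^+ (p ^ i).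
Proof. exact: exprDn_pchar (gen_pnat i). Qed.

Lemma frobN (x : F) i : (- x) ^+ (p ^ i) = - x ^+ (p ^ i).
Proof. exact: exprNn_pchar (gen_pnat i). Qed.

Lemma size_XnsubX n : (1 < n)%N -> size ('X^n - 'X : {poly F}) = n.+1.
Proof. by move=> n1; rewrite size_addl ?size_polyXn // size_opp size_polyX. Qed.

Lemma card_roots (P : {poly F}) : P != 0 -> (#|[pred x | root P x]| < size P)%N.
Proof.
move=> nz; rewrite cardE; apply: max_poly_roots nz _ _.
  by apply/allP => x; rewrite mem_enum.
exact: enum_uniq.
Qed.

Lemma natr_inj (k l : nat) : (k < p)%N -> (l < p)%N -> (k%:R : F) = l%:R -> k = l.
Proof.
wlog kl : k l / (k <= l)%N.
  move=> H hk hl e; case: (leqP k l) => [kl|/ltnW lk]; first exact: H.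
  by symmetry; apply: H.
move=> hk hl e.
have : (p %| l - k)%N by rewrite (dvdn_pcharf hp) natrB // e subrr.
have : (l - k < p)%N by apply: leq_ltn_trans hl; rewrite leq_subr.
move=> lt dv; case: (posnP (l - k)) => [/eqP|pos].
  by rewrite subn_eq0 => lk; apply/eqP; rewrite eqn_leq kl lk.
by have := dvdn_leq pos dv; rewrite leqNgt lt.
Qed.

Lemma primefield (y : F) : y ^+ p = y -> exists2 k, (k < p)%N & y = k%:R.
Proof.
move=> yp.
have p1 : (1 < p)%N by rewrite prime_gt1 ?gen_prime.
set B := [seq (k%:R : F) | k <- iota 0 p].
case: (boolP (y \in B)) => [/mapP [k] | yB].
  by rewrite mem_iota add0n => /andP [_ hk] ->; exists k.
have nz : ('X^p - 'X : {poly F}) != 0 by rewrite -size_poly_eq0 size_XnsubX.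
have := max_poly_roots nz (rs := y :: B).
rewrite size_XnsubX // /= size_map size_iota ltnn.
have rootE (z : F) : z ^+ p = z -> root ('X^p - 'X : {poly F}) z.
  by move=> zp; rewrite /root !hornerE zp subrr.
have allB : all (root ('X^p - 'X)) B.
  apply/allP => z /mapP [k _ ->].
  by apply: rootE; rewrite -pFrobenius_autE pFrobenius_aut_nat.
rewrite rootE // allB yB map_inj_in_uniq ?iota_uniq //.
  by move=> /(_ isT isT).
move=> k l; rewrite !mem_iota !add0n => /andP [_ hk] /andP [_ hl].
exact: natr_inj.
Qed.

Lemma primeRep_nat k : (k < p)%N -> primeRep p (k%:R : F) = k.
Proof.
move=> hk; rewrite /primeRep; case: pickP => [k' /eqP hk' | none] /=.
  by apply: natr_inj => //; apply: ltn_ord.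
by have := none (Ordinal hk); rewrite eqxx.
Qed.

Let m := logn p #|F|.

Lemma absTrD (y z : F) : absTr p (y + z) = absTr p y + absTr p z.
Proof. by rewrite /absTr -big_split; apply: eq_bigr => i _; apply: frobD. Qed.

Lemma frob_card (y : F) : y ^+ (p ^ m) = y.
Proof. by rewrite /m -gen_card expf_card. Qed.

Lemma absTr_frob (y : F) : (absTr p y) ^+ p = absTr p y.
Proof.
rewrite /absTr -pFrobenius_autE (rmorph_sum (pFrobenius_aut hp)).
have E : \sum_(i < m) pFrobenius_aut hp (y ^+ (p ^ i)) = \sum_(i < m) y ^+ (p ^ i.+1).
  apply: eq_bigr => i _; by rewrite pFrobenius_autE -exprM expnSr.
rewrite [X in X = _]E.
have := erefl (\sum_(i < m.+1) y ^+ (p ^ i)).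
rewrite {1}big_ord_recl big_ord_recr /= expn0 expr1 frob_card.
move=> H; apply: (addrI y); rewrite H addrC; congr (_ + _).
Qed.

Lemma absTr_prime (y : F) : exists2 k, (k < p)%N & absTr p y = k%:R.
Proof. exact: primefield (absTr_frob y). Qed.

Lemma absTr_anti n (y : F) : m = (n + n)%N -> y ^+ (p ^ n) = - y -> absTr p y = 0.
Proof.
move=> hm hy; rewrite /absTr.
have -> : logn p #|F| = (n + n)%N by [].
rewrite big_split_ord /= -big_split /= big1 // => i _.
by rewrite expnD exprM hy frobN subrr.
Qed.

End Gen.

Unset Implicit Arguments.

Section Psi.
Variable R : realType.
Definition ee (t : R) : R[i] := Complex (cos t) (sin t).

Lemma eeD s t : ee (s + t) = ee s * ee t.
Proof. by rewrite /ee cosD sinD; simpc; congr Complex; rewrite addrC. Qed.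

Lemma ee_2pi t : ee (t + pi *+ 2) = ee t.
Proof. by rewrite /ee cosD2pi sinD2pi. Qed.

Lemma ee_period t k : ee (t + 2 * pi * k%:R) = ee t.
Proof.
elim: k => [|k IH]; first by rewrite mulr0 addr0.
have -> : t + 2 * pi * k.+1%:R = (t + 2 * pi * k%:R) + pi *+ 2.
  by rewrite mulrSr; ring.
by rewrite ee_2pi IH.
Qed.

Lemma ee0 : ee 0 = 1.
Proof. by rewrite /ee cos0 sin0; reflexivity. Qed.

Variables (F : finFieldType) (p : nat) (hp : p \in [pchar F]).

Lemma psiE (y : F) : psi R p y = ee (2 * pi * (primeRep p (absTr p y))%:R / p%:R).
Proof. reflexivity. Qed.
Lemma dummy : True.
Proof. by []. Qed.

Lemma psiD (y z : F) : psi R p (y + z) = psi R p y * psi R p z.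
Proof.
have p0 : (0 < p)%N := prime_gt0 (gen_prime hp).
have [ry hry ey] := absTr_prime hp y.
have [rz hrz ez] := absTr_prime hp z.
rewrite !psiE (absTrD hp) ey ez -natrD -(GRing.natr_mod_pchar hp) !primeRep_nat //;
  last by rewrite ltn_pmod.
rewrite -eeD.
have pn0 : (p%:R : R) != 0 by rewrite pnatr_eq0 -lt0n.
have E : (ry%:R + rz%:R : R) = ((ry+rz)%/p)%:R * p%:R + ((ry+rz)%%p)%:R.
  by rewrite -natrD -natrM -natrD -divn_eq.
have -> : 2 * pi * ry%:R / p%:R + 2 * pi * rz%:R / p%:R
    = 2 * pi * (ry%:R + rz%:R) / p%:R :> R by field.
rewrite E.
set a : R := ((ry + rz) %/ p)%:R; set b : R := ((ry + rz) %% p)%:R.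
have -> : 2 * pi * (a * p%:R + b) / p%:R = 2 * pi * b / p%:R + 2 * pi * a.
  by field.
by rewrite /a ee_period.
Qed.

Lemma psi1 (y : F) : absTr p y = 0 -> psi R p y = 1.
Proof.
move=> h; have p0 : (0 < p)%N := prime_gt0 (gen_prime hp).
have := primeRep_nat hp p0; rewrite mulr0n psiE h => ->.
by rewrite mulr0 mul0r ee0.
Qed.

End Psi.

Set Implicit Arguments.

Lemma char_sum (R : realType) (K : finFieldType) (chi : K -> R[i]) :
  (forall a b, chi (a + b) = chi a * chi b) ->
  \sum_c chi c = if [forall c, chi c == 1] then #|K|%:R else 0.
Proof.
move=> hmul; case: ifP => [/forallP h | /negbT].
  by rewrite (eq_bigr (fun _ => 1)) ?sumr_const // => c _; apply/eqP/h.
rewrite negb_forall => /existsP [c0 hc0].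
set S := \sum_c chi c.
have : S = chi c0 * S.
  rewrite {1}/S (reindex_inj (addrI c0)) /= mulr_sumr.
  by apply: eq_bigr => c _; exact: hmul.
move/eqP; rewrite -subr_eq0 -{1}(mul1r S) -mulrBl mulf_eq0 subr_eq0 eq_sym.
by rewrite (negbTE hc0) /= => /eqP.
Qed.

Section Ker.
Variables (F : finFieldType) (p : nat) (hp : p \in [pchar F]) (n : nat).
Hypothesis n0 : (0 < n)%N.
Hypothesis hcard : #|F| = (p ^ n * p ^ n)%N.

Lemma ker_count : (p ^ n <= #|[pred x : F | x ^+ (p ^ n) == - x]|)%N.
Proof.
set q := (p ^ n)%N.
have q1 : (1 < q)%N.
  by rewrite /q -{1}(expn0 p) ltn_exp2l ?prime_gt1 ?(gen_prime hp).
pose f (x : F) := x ^+ q + x.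
have fD x y : f (x + y) = f x + f y.
  by rewrite /f frobD // addrACA.
have fN x : f (- x) = - f x by rewrite /f frobN // opprD.
have fimg x : root ('X^q - 'X) (f x).
  rewrite /root !hornerE /f frobD // -exprM -/q.
  have -> : x ^+ (q * q) = x by rewrite /q -hcard expf_card.
  by rewrite [x + _]addrC subrr.
set A := [pred y : F | root ('X^q - 'X) y].
have cA : (#|A| <= q)%N.
  have nz : ('X^q - 'X : {poly F}) != 0 by rewrite -size_poly_eq0 size_XnsubX.
  by have := card_roots nz; rewrite size_XnsubX.
set Kr := [pred x : F | f x == 0].
pose g y := odflt 0 [pick z | f z == y].
have gP x : f (g (f x)) = f x.
  rewrite /g; case: pickP => [z /eqP // | none].
  by have := none x; rewrite eqxx.
pose h x := (f x, x - g (f x)).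
have hinj : injective h.
  move=> x y [e1 e2]; rewrite e1 in e2; exact: (addIr _ e2).
have sub : h @: [set: F] \subset setX [set y in A] [set x in Kr].
  apply/subsetP => _ /imsetP [x _ ->]; rewrite !inE /= fimg /=.
  by rewrite fD fN gP subrr.
have := subset_leq_card sub; rewrite cardsX card_imset // cardsT !cardsE hcard.
move=> H.
have : (q * q <= q * #|Kr|)%N.
  apply: leq_trans H _; apply: leq_mul => //.
rewrite leq_pmul2l; last by apply: ltnW.
move=> H2; apply: leq_trans H2 _; apply: subset_leq_card.
by apply/subsetP => x; rewrite !inE /= addr_eq0.
Qed.

End Ker.

Unset Implicit Arguments. Set Strict Implicit.

Lemma sum_const_pred (T : finType) (V : nmodType) (P : pred T) (c : V) :
  \sum_(i | P i) c = c *+ #|P|.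
Proof. exact: sumr_const. Qed.

Lemma sum_const_all (T : finType) (V : nmodType) (c : V) :
  \sum_(i : T) c = c *+ #|T|.
Proof. exact: sumr_const. Qed.

Theorem corollary4p5 (R : realType) (K : finFieldType) (L : fieldExtType K)
    (p : nat) (charKp : p \in [pchar K])
    (hquad : \dim {: L} = 2%N)
    (d : nat) (hgcd : coprime d (#|FinFieldExtType L| - 1))
    (hdeg : exists j : nat, d = p ^ j %[mod #|K| - 1])
    (a : K) :
  0 <= @WLd R p (FinFieldExtType L) d (a%:A : FinFieldExtType L).
Proof.
set F := FinFieldExtType L.
have hpF : p \in [pchar F] by rewrite (pchar_lalg F).
have pr := gen_prime charKp.
set q := #|K|.
set n := logn p q.
have hq : q = (p ^ n)%N := gen_card charKp.
have q1 : (1 < q)%N := finNzRing_gt1 K.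
have n0 : (0 < n)%N.
  by rewrite lt0n; apply/negP => /eqP n0; move: q1; rewrite hq n0.
have cardF : #|F| = (q * q)%N.
  have := card_vspace (fullv : {vspace finvect_type L}); rewrite card_vspacef.
  move=> ->; rewrite dimvf; have := hquad; rewrite dimvf => h; rewrite [dim _]h.
  by rewrite expnS expn1.
have cardF' : #|F| = (p ^ n * p ^ n)%N by rewrite cardF hq.
have mF : logn p #|F| = (n + n)%N by rewrite cardF' -expnD pfactorK.
have d0 : (0 < d)%N.
  rewrite lt0n; apply/negP => /eqP d0; move: hgcd; rewrite d0 /coprime gcd0n.
  rewrite cardF => /eqP h.
  have : (2 * 2 <= q * q)%N by apply: leq_mul.
  have : (q * q = 2)%N.
    by move: h; case: (q * q)%N => [|[|k]] //= [->].
  by move=> ->.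
have m1d : (-1 : F) ^+ d = -1.
  case: (boolP (odd d)) => od; first by rewrite -signr_odd od expr1.
  have oddm : odd (#|F| - 1).
    apply/negPn/negP => em; move: hgcd; rewrite /coprime => /eqP g1.
    have : (2 %| gcdn d (#|F| - 1))%N by rewrite dvdn_gcd !dvdn2 od em.
    by rewrite g1.
  have p2 : p = 2%N.
    have qq : (0 < q * q)%N by rewrite muln_gt0 (ltnW q1).
    move: oddm; rewrite -cardF in qq; rewrite oddB // cardF oddM andbb hq oddX.
    rewrite (gtn_eqF n0) /=; case: (even_prime pr) => // ->.
    by rewrite addbT.
  have h2 : (2 \in [pchar F])%N by rewrite -p2.
  by rewrite (GRing.oppr_pchar2 h2) expr1n.
case: hdeg => j hj.
have powK (c : K) : c ^+ d = c ^+ (p ^ j).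
  case: (eqVneq c 0) => [->|cn0].
    by rewrite !expr0n (gtn_eqF d0) eqn0Ngt expn_gt0 prime_gt0.
  have c1 : c ^+ (q - 1) = 1.
    apply: (mulIf cn0); rewrite mul1r -exprSr subn1 prednK ?(ltnW q1) //.
    exact: expf_card.
  by rewrite -(expr_mod _ c1) hj (expr_mod _ c1).
have algX (c : K) k : ((c%:A : F) ^+ k) = (c ^+ k)%:A.
  by rewrite -!in_algE rmorphXn.
have algq (c : K) : (c%:A : F) ^+ (p ^ n) = c%:A.
  by rewrite algX -hq expf_card.
have algnz (c : K) : c != 0 -> (c%:A : F) != 0.
  by move=> cn0; rewrite -in_algE fmorph_eq0.
pose chi (x : F) (c : K) :=
  psi R p ((c%:A : F) ^+ d * x ^+ d + (a%:A : F) * ((c%:A : F) * x)).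
have chiD x c1 c2 : chi x (c1 + c2) = chi x c1 * chi x c2.
  rewrite /chi -(psiD R _ _ hpF); congr psi.
  rewrite !algX !powK (frobD charKp) !scalerDl.
  ring.
have chi1 x : x ^+ (p ^ n) = - x -> forall c, chi x c = 1.
  move=> hx c; apply: (psi1 R _ _ hpF); apply: (absTr_anti hpF mF).
  have e1 : ((c%:A : F) ^+ d) ^+ (p ^ n) = (c%:A : F) ^+ d.
    by rewrite -exprM mulnC exprM algq.
  have e2 : (x ^+ d) ^+ (p ^ n) = - x ^+ d.
    by rewrite -exprM mulnC exprM hx exprNn m1d mulN1r.
  rewrite (frobD hpF) !exprMn e1 e2 !algq hx; ring.
have Wc c : c != 0 -> \sum_x chi x c = WLd R p d (a%:A : F).
  move=> cn0; rewrite /WLd [RHS](reindex_inj (mulfI (algnz c cn0))) /=.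
  by apply: eq_bigr => x _; rewrite /chi exprMn.
have chi0 x : chi x 0 = 1.
  apply: (psi1 R _ _ hpF); rewrite /chi scale0r expr0n (gtn_eqF d0) /=.
  rewrite !mul0r mulr0 addr0 /absTr big1 // => i _.
  by rewrite expr0n expn_eq0 (gtn_eqF (prime_gt0 pr)).
set W := WLd R p d (a%:A : F).
set N := #|[pred x : F | [forall c, chi x c == 1]]|.
have E1 : \sum_c \sum_x chi x c = (q * q)%:R + W *+ q.-1.
  rewrite (bigD1 0) //; congr (_ + _).
    rewrite (eq_bigr (fun _ => 1)) => [|x _]; last exact: chi0.
    by rewrite sum_const_all cardF.
  rewrite (eq_bigr (fun _ => W)) => [|c hc]; last exact: Wc.
  by rewrite sum_const_pred cardC1.
have E2 : \sum_c \sum_x chi x c = (q * N)%:R.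
  rewrite exchange_big /=.
  rewrite (eq_bigr (fun x => if [forall c, chi x c == 1] then q%:R else 0)).
    by rewrite -big_mkcond sum_const_pred -mulrnA.
  by move=> x _; exact: char_sum (chiD x).
have NK : (q <= N)%N.
  rewrite hq; apply: leq_trans (ker_count hpF n0 cardF') _.
  apply: subset_leq_card; apply/subsetP => x; rewrite !inE => /eqP hx.
  by apply/forallP => c; rewrite chi1.
have EW : W *+ q.-1 = (q * N - q * q)%:R.
  rewrite natrB ?leq_mul2l ?NK ?orbT // -E2 E1; ring.
have qp : (0 : R[i]) < q.-1%:R by rewrite ltr0n -subn1 subn_gt0.
by rewrite -(pmulr_lge0 _ qp) mulr_natr EW ler0n.
Qed.
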